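(* Let $\mathcal{E}$ be a finite-dimensional Euclidean space, $e\in\mathcal{E}$ nonzero, $H=\{x\in\mathcal{E}:\langle e,x\rangle=1\}$, let $C\subseteq H$ be a compact convex set and $\mathcal{K}=\operatorname{cone}C$. Then for every $x\in H\setminus(-\mathcal{K}^* )$, $$\operatorname{dist}(x,C)\le\|e\|\,r\,\operatorname{dist}(x,\mathcal{K}),$$ where $r=\max_{u\in C}\|u\|$.
   Context: $\operatorname{cone}C=\{\lambda x: x\in C,\lambda\ge0\}$; $\mathcal{K}^*=\{y:\langle y,x\rangle\ge0\ \forall x\in\mathcal{K}\}$ is the dual cone. *)

(* Defs.v *)
From HB Require Import structures.
From mathcomp Require Import all_boot all_order all_algebra.
From mathcomp Require Import all_classical all_reals all_analysis.
Set Implicit Arguments. Unset Strict Implicit. Unset Printing Implicit Defensive.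
Import Order.TTheory GRing.Theory Num.Theory.
Import numFieldNormedType.Exports.
Local Open Scope classical_set_scope.
Local Open Scope ring_scope.

(* The Euclidean space E is modelled as R^n = 'rV[R]_n with the standard
   inner product; compactness uses the library topology on matrices
   (all norms are equivalent in finite dimension). *)

Definition dotp (R : realType) (n : nat) (x y : 'rV[R]_n) : R :=
  \sum_(i < n) x ord0 i * y ord0 i.

Definition enorm (R : realType) (n : nat) (x : 'rV[R]_n) : R :=
  Num.sqrt (dotp x x).

Definition euclid_dist (R : realType) (n : nat) (x : 'rV[R]_n) (S : set 'rV[R]_n) : R :=
  inf [set enorm (x - y) | y in S].

Definition cone (R : realType) (n : nat) (C : set 'rV[R]_n) : set 'rV[R]_n :=
  [set y | exists2 l : R, 0 <= l & exists2 x, C x & y = l *: x].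

Definition dual_cone (R : realType) (n : nat) (K : set 'rV[R]_n) : set 'rV[R]_n :=
  [set y | forall x, K x -> 0 <= dotp y x].

Definition neg_set (R : realType) (n : nat) (S : set 'rV[R]_n) : set 'rV[R]_n :=
  [set x | S (- x)].

Definition convex_set_ (R : realType) (n : nat) (C : set 'rV[R]_n) : Prop :=
  forall x y (t : R), C x -> C y -> 0 <= t -> t <= 1 ->
    C (t *: x + (1 - t) *: y).

Definition hyperplane (R : realType) (n : nat) (e : 'rV[R]_n) : set 'rV[R]_n :=
  [set x | dotp e x = 1].

(* Main.v *)
Require Import Defs.
From HB Require Import structures.
From mathcomp Require Import all_boot all_order all_algebra.
From mathcomp Require Import all_classical all_reals all_analysis.
From mathcomp Require Import ring lra.
Import Order.TTheory GRing.Theory Num.Theory.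
Import numFieldNormedType.Exports.
Local Open Scope classical_set_scope.
Local Open Scope ring_scope.

Section Dot.
Variables (R : realType) (n : nat).
Implicit Types x y z u v : 'rV[R]_n.

Lemma dotpC x y : dotp x y = dotp y x.
Proof. by rewrite /dotp; apply: eq_bigr => i _; rewrite mulrC. Qed.

Lemma dotpDl x y z : dotp (x + y) z = dotp x z + dotp y z.
Proof. by rewrite /dotp -big_split; apply: eq_bigr => i _; rewrite mxE mulrDl. Qed.

Lemma dotpZl k x y : dotp (k *: x) y = k * dotp x y.
Proof. by rewrite /dotp mulr_sumr; apply: eq_bigr => i _; rewrite mxE mulrA. Qed.

Lemma dotpNl x y : dotp (- x) y = - dotp x y.
Proof. by rewrite /dotp -sumrN; apply: eq_bigr => i _; rewrite mxE mulNr. Qed.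

Lemma dotpBl x y z : dotp (x - y) z = dotp x z - dotp y z.
Proof. by rewrite dotpDl dotpNl. Qed.

Lemma dotpBr x y z : dotp z (x - y) = dotp z x - dotp z y.
Proof. by rewrite dotpC dotpBl !(dotpC z). Qed.

Lemma dotpZr k x y : dotp y (k *: x) = k * dotp y x.
Proof. by rewrite dotpC dotpZl dotpC. Qed.

Lemma dotp_ge0 x : 0 <= dotp x x.
Proof. by apply: sumr_ge0 => i _; rewrite -expr2 sqr_ge0. Qed.

Lemma dotp_eq0 u v : dotp v v = 0 -> dotp u v = 0.
Proof.
move=> H; rewrite /dotp big1 // => i _.
have hge : forall j : 'I_n, true -> 0 <= v ord0 j * v ord0 j.
  by move=> j _; rewrite -expr2 sqr_ge0.
have := @psumr_eq0P _ _ _ _ hge H i isT.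
by move/eqP; rewrite mulf_eq0 orbb => /eqP ->; rewrite mulr0.
Qed.

Lemma CS u v : dotp u v ^+ 2 <= dotp u u * dotp v v.
Proof.
have [b0|bn0] := eqVneq (dotp v v) 0.
  by rewrite b0 (dotp_eq0 u v b0) expr0n /= mulr0.
have bp : 0 < dotp v v by rewrite lt0r bn0 dotp_ge0.
have := dotp_ge0 (dotp v v *: u - dotp u v *: v).
rewrite !dotpBl !dotpBr !dotpZl !dotpZr (dotpC v u).
set a := dotp u u; set b := dotp v v; set g := dotp u v => H.
have : 0 <= b * (b * a - g ^+ 2) by nra.
by rewrite pmulr_rge0 // subr_ge0 mulrC.
Qed.

Lemma key x c e l : dotp e c = 1 -> dotp e x = 1 ->
  dotp (x - c) (x - c) <= dotp c c * dotp e e * dotp (x - l *: c) (x - l *: c).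
Proof.
move=> ec ex.
have a0 : dotp c c != 0.
  by apply/eqP => /(dotp_eq0 e c); rewrite ec; apply/eqP; rewrite oner_eq0.
have ap : 0 < dotp c c by rewrite lt0r a0 dotp_ge0.
have bp := dotp_ge0 e.
have := CS (dotp c c *: x - dotp x c *: c) (dotp c c *: e - c).
rewrite ?dotpBl ?dotpBr ?dotpZl ?dotpZr.
rewrite ?(dotpC x e) ?(dotpC c e) ?(dotpC c x) ?ec ?ex.
set a := dotp c c; set b := dotp e e; set p := dotp x c; set q := dotp x x.
move=> H.
rewrite ?dotpBl ?dotpBr ?dotpZl ?dotpZr ?(dotpC c x) -/a -/p -/q.
have ap' : 0 < a by [].
have bp' : 0 <= b by [].
have E : (a * (a * q) - a * (p * p) - (p * (a * p) - p * (p * a))) *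
    (a * (a * b) - a * 1 - (a * 1 - a)) - (a * (a * 1) - a * p - (p * (a * 1) - p * a)) ^+ 2
   = a ^+ 3 * (b * (a * q - p ^+ 2) - (q - 2 * p + a)) by ring.
have G : 0 <= b * (a * q - p ^+ 2) - (q - 2 * p + a).
  have : 0 <= a ^+ 3 * (b * (a * q - p ^+ 2) - (q - 2 * p + a)) by rewrite -E subr_ge0.
  by rewrite pmulr_rge0 // exprn_gt0.
have : 0 <= b * (l * a - p) ^+ 2 by rewrite mulr_ge0 // sqr_ge0.
have E2 : a * b * (q - l * p - (l * p - l * (l * a))) - (q - p - (p - a)) =
  (b * (a * q - p ^+ 2) - (q - 2 * p + a)) + b * (l * a - p) ^+ 2 by ring.
move=> h; rewrite -subr_ge0 E2; exact: addr_ge0.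
Qed.

End Dot.

Theorem proposition4p2 (R : realType) (n : nat) (e : 'rV[R]_n)
    (C : set 'rV[R]_n) (r : R) :
  e != 0 ->
  C `<=` hyperplane e ->
  compact C ->
  convex_set_ C ->
  C !=set0 ->
  (exists2 u, C u & enorm u = r) ->
  (forall u, C u -> enorm u <= r) ->
  forall x : 'rV[R]_n, hyperplane e x -> ~ neg_set (dual_cone (cone C)) x ->
    euclid_dist x C <= enorm e * r * euclid_dist x (cone C).
Proof.
move=> _ CH _ _ [c0 Cc0] _ Cr x Hx _.
have dotpE : forall c, C c -> dotp e c = 1 by move=> c /CH.
have cpos : forall c, C c -> 0 < dotp c c.
  move=> c Cc; rewrite lt0r dotp_ge0 andbT; apply/eqP => /(@dotp_eq0 _ _ e c).
  by rewrite dotpE //; apply/eqP; rewrite oner_eq0.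
have epos : 0 < dotp e e.
  rewrite lt0r dotp_ge0 andbT; apply/eqP => /(@dotp_eq0 _ _ c0 e).
  by rewrite dotpC dotpE //; apply/eqP; rewrite oner_eq0.
have rpos : 0 < r.
  by apply: (lt_le_trans _ (Cr _ Cc0)); rewrite /enorm sqrtr_gt0 cpos.
have enpos : 0 < enorm e by rewrite /enorm sqrtr_gt0.
have kpos : 0 < enorm e * r by rewrite mulr_gt0.
have lbC : has_lbound [set enorm (x - y) | y in C].
  by exists 0 => _ [y _ <-]; rewrite /enorm sqrtr_ge0.
have step : forall y, cone C y -> euclid_dist x C <= enorm e * r * enorm (x - y).
  move=> _ [l l0 [c Cc ->]].
  apply: (le_trans (ge_inf lbC (ex_intro2 _ _ c Cc erefl))).
  apply: (@le_trans _ _ (enorm c * enorm e * enorm (x - l *: c))).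
    rewrite /enorm -!sqrtrM ?dotp_ge0 ?mulr_ge0 ?dotp_ge0 //.
    by rewrite ler_sqrt ?mulr_ge0 ?dotp_ge0 // key // dotpE.
  rewrite [enorm e * r]mulrC; apply: ler_wpM2r; first by rewrite /enorm sqrtr_ge0.
  by apply: ler_wpM2r; [exact: ltW | exact: Cr].
rewrite -ler_pdivrMl //; apply: lb_le_inf.
  by exists (enorm (x - c0)), c0 => //; exists 1 => //; exists c0 => //; rewrite scale1r.
move=> _ [y Ky <-]; rewrite ler_pdivrMl //; exact: step.
Qed.
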